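(* Let $V$ be a complex normed vector space and $x=\{x_n\}_{n=1}^\infty\in l^{\infty}(V)$. If $x$ is strongly almost convergent to $v\in V$, then $v\in\overline{\mathrm{co}}\{x_n:n\in\mathbb{N}\}$, the norm-closure of the convex hull of $\{x_n:n\in\mathbb{N}\}$.
   Context: $l^{\infty}(V)$ is the space of bounded sequences $x=\{x_n\}_{n=1}^\infty$ in $V$ with norm $\|x\|_\infty=\sup_n\|x_n\|_V$. For $v\in V$, $\widetilde v=\{v,v,\dots\}$. $T$ is the left shift: $T\{x_1,x_2,\dots\}=\{x_2,x_3,\dots\}$. A Banach limit functional is a bounded linear functional $L$ on $l^\infty(V)$ with $\|L\|\le1$ and $L(Tx)=L(x)$ for all $x$. A sequence $x\in l^\infty(V)$ is strongly almost convergent to $v\in V$ if $L(x)=L(\widetilde v)$ for every Banach limit functional $L$. *)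

(* Defs.v *)
From Stdlib Require Import Reals.
Open Scope R_scope.

Record CC : Type := mkCC { Cre : R ; Cim : R }.
Definition C0 : CC := mkCC 0 0.
Definition C1 : CC := mkCC 1 0.
Definition RtoC (r : R) : CC := mkCC r 0.
Definition Cplus (a b : CC) : CC := mkCC (Cre a + Cre b) (Cim a + Cim b).
Definition Cmult (a b : CC) : CC :=
  mkCC (Cre a * Cre b - Cim a * Cim b) (Cre a * Cim b + Cim a * Cre b).
Definition Cmod (a : CC) : R := sqrt (Cre a * Cre a + Cim a * Cim a).

Record CNormedSpace : Type := {
  carrier :> Type;
  vzero : carrier;
  vadd : carrier -> carrier -> carrier;
  vopp : carrier -> carrier;
  vscal : CC -> carrier -> carrier;
  vnorm : carrier -> R;
  vadd_assoc : forall x y z, vadd x (vadd y z) = vadd (vadd x y) z;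
  vadd_comm : forall x y, vadd x y = vadd y x;
  vadd_zero : forall x, vadd x vzero = x;
  vadd_opp : forall x, vadd x (vopp x) = vzero;
  vscal_assoc : forall a b x, vscal a (vscal b x) = vscal (Cmult a b) x;
  vscal_one : forall x, vscal C1 x = x;
  vscal_distr_v : forall a x y, vscal a (vadd x y) = vadd (vscal a x) (vscal a y);
  vscal_distr_c : forall a b x, vscal (Cplus a b) x = vadd (vscal a x) (vscal b x);
  vnorm_nonneg : forall x, 0 <= vnorm x;
  vnorm_eq0 : forall x, vnorm x = 0 -> x = vzero;
  vnorm_zero : vnorm vzero = 0;
  vnorm_triangle : forall x y, vnorm (vadd x y) <= vnorm x + vnorm y;
  vnorm_scal : forall a x, vnorm (vscal a x) = Cmod a * vnorm x
}.

Arguments vzero {_}. Arguments vadd {_}. Arguments vopp {_}.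
Arguments vscal {_}. Arguments vnorm {_}.

Definition vsub {V : CNormedSpace} (x y : V) : V := vadd x (vopp y).

(** Elements of l^infty(V): sequences (indexed by nat) with bounded norm. *)
Definition bounded_seq {V : CNormedSpace} (x : nat -> V) : Prop :=
  exists M : R, forall n, vnorm (x n) <= M.

Definition seq_add {V : CNormedSpace} (x y : nat -> V) : nat -> V :=
  fun n => vadd (x n) (y n).
Definition seq_scal {V : CNormedSpace} (a : CC) (x : nat -> V) : nat -> V :=
  fun n => vscal a (x n).
Definition const_seq {V : CNormedSpace} (v : V) : nat -> V := fun _ => v.
Definition shift {V : CNormedSpace} (x : nat -> V) : nat -> V := fun n => x (S n).

(** L is given as a function on all sequences but only its values on bounded
    sequences matter. *)
Definition BanachLimit {V : CNormedSpace} (L : (nat -> V) -> CC) : Prop :=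
  (forall x y, bounded_seq x -> bounded_seq y ->
      L (seq_add x y) = Cplus (L x) (L y)) /\
  (forall a x, bounded_seq x -> L (seq_scal a x) = Cmult a (L x)) /\
  (forall x M, bounded_seq x -> (forall n, vnorm (x n) <= M) -> Cmod (L x) <= M) /\
  (forall x, bounded_seq x -> L (shift x) = L x).

Definition strongly_almost_convergent {V : CNormedSpace} (x : nat -> V) (v : V) : Prop :=
  forall L : (nat -> V) -> CC, BanachLimit L -> L x = L (const_seq v).

Fixpoint vsum {V : CNormedSpace} (f : nat -> V) (n : nat) : V :=
  match n with O => vzero | S k => vadd (vsum f k) (f k) end.
Fixpoint rsum (f : nat -> R) (n : nat) : R :=
  match n with O => 0 | S k => rsum f k + f k end.

Definition in_convex_hull {V : CNormedSpace} (S : V -> Prop) (y : V) : Prop :=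
  exists (n : nat) (lam : nat -> R) (p : nat -> V),
    (forall i, (i < n)%nat -> 0 <= lam i /\ S (p i)) /\
    rsum lam n = 1 /\
    y = vsum (fun i => vscal (RtoC (lam i)) (p i)) n.

Definition in_closure {V : CNormedSpace} (A : V -> Prop) (v : V) : Prop :=
  forall eps : R, 0 < eps -> exists y, A y /\ vnorm (vsub v y) < eps.

Definition range_of {V : CNormedSpace} (x : nat -> V) : V -> Prop :=
  fun w => exists n, w = x n.

(* Main.v *)
From Stdlib Require Import Reals Lra Lia Classical ClassicalEpsilon FunctionalExtensionality PropExtensionality ProofIrrelevance.
Require Import Defs.
Open Scope R_scope.

Record RVS : Type := {
  T :> Type; z0 : T; ad : T -> T -> T; sc : R -> T -> T;
  ad_assoc : forall x y z, ad x (ad y z) = ad (ad x y) z;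
  ad_comm : forall x y, ad x y = ad y x;
  ad_z0 : forall x, ad x z0 = x;
  ad_opp : forall x, ad x (sc (-1) x) = z0;
  sc_adr : forall r x y, sc r (ad x y) = ad (sc r x) (sc r y);
  sc_adl : forall r s x, sc (r + s) x = ad (sc r x) (sc s x);
  sc_sc : forall r s x, sc r (sc s x) = sc (r * s) x;
  sc_1 : forall x, sc 1 x = x }.
Arguments z0 {_}. Arguments ad {_}. Arguments sc {_}.

Lemma ad_cancel (E : RVS) (a b c : E) : ad a b = ad a c -> b = c.
Proof.
  intro H. assert (H2 : ad (sc (-1) a) (ad a b) = ad (sc (-1) a) (ad a c)) by (rewrite H; auto).
  rewrite !ad_assoc, (ad_comm _ (sc (-1) a) a), ad_opp in H2.
  rewrite (ad_comm _ z0 b), (ad_comm _ z0 c), !ad_z0 in H2. exact H2.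
Qed.

Lemma sc_0 (E : RVS) (x : E) : sc 0 x = z0.
Proof.
  apply (ad_cancel E (sc 0 x)). rewrite ad_z0, <- sc_adl. f_equal; ring.
Qed.

Lemma sc_z0 (E : RVS) (r : R) : sc r (@z0 E) = z0.
Proof.
  rewrite <- (sc_0 E z0), sc_sc. f_equal; ring.
Qed.

Lemma z0_ad (E : RVS) (x : E) : ad z0 x = x.
Proof. rewrite ad_comm; apply ad_z0. Qed.

Lemma ad_swap (E : RVS) (a b c d : E) : ad (ad a b) (ad c d) = ad (ad a c) (ad b d).
Proof.
  rewrite <- !ad_assoc. f_equal. rewrite !ad_assoc. f_equal. apply ad_comm.
Qed.

Lemma sc_minus (E : RVS) (t s : R) (z : E) : ad (sc t z) (sc (-s) z) = sc (t - s) z.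
Proof. rewrite <- sc_adl. f_equal; ring. Qed.

Lemma lin_solve (E : RVS) (a b z : E) (t s : R) :
  ad a (sc t z) = ad b (sc s z) -> sc (t - s) z = ad b (sc (-1) a).
Proof.
  intro H.
  assert (H2 : ad (ad a (sc t z)) (ad (sc (-1) a) (sc (-s) z)) =
               ad (ad b (sc s z)) (ad (sc (-1) a) (sc (-s) z))) by (rewrite H; auto).
  rewrite (ad_swap _ a), (ad_swap _ b), ad_opp, !sc_minus, z0_ad in H2. rewrite H2.
  replace (s - s) with 0 by ring. rewrite sc_0, ad_z0. auto.
Qed.

Definition incl {A B : Type} (G H : A -> B -> Prop) := forall a b, G a b -> H a b.
Definition Un {A B : Type} (G0 : A -> B -> Prop) (C : (A -> B -> Prop) -> Prop) : A -> B -> Prop :=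
  fun a b => G0 a b \/ exists G, C G /\ G a b.

Inductive tower {A B : Type} (G0 : A -> B -> Prop) (f : (A -> B -> Prop) -> (A -> B -> Prop))
  : (A -> B -> Prop) -> Prop :=
| tw_f : forall G, tower G0 f G -> tower G0 f (f G)
| tw_U : forall C, (forall G, C G -> tower G0 f G) -> tower G0 f (Un G0 C).

Lemma incl_antisym {A B : Type} (G H : A -> B -> Prop) : incl G H -> incl H G -> G = H.
Proof.
  intros H1 H2. extensionality a. extensionality b. apply propositional_extensionality. split; auto.
Qed.

Lemma incl_trans {A B : Type} (G H K : A -> B -> Prop) : incl G H -> incl H K -> incl G K.
Proof. unfold incl; auto. Qed.

Lemma tower_G0 {A B : Type} G0 f (Hinf : forall G, @incl A B G (f G)) G :
  tower G0 f G -> incl G0 G.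
Proof.
  induction 1.
  - eapply incl_trans; eauto.
  - intros a b Hab. left; auto.
Qed.

Lemma tw_lemma1 {A B : Type} G0 f (Hinf : forall G, @incl A B G (f G)) m :
  tower G0 f m -> (forall x, tower G0 f x -> incl x m -> incl m x \/ incl (f x) m) ->
  forall n, tower G0 f n -> incl n m \/ incl (f m) n.
Proof.
  intros Tm Hm n Tn. induction Tn as [x Tx IH | C HC IH].
  - destruct IH as [Hxm | Hfx].
    + destruct (Hm x Tx Hxm) as [Hmx | Hfxm].
      * right. rewrite (incl_antisym x m Hxm Hmx). intros a b; auto.
      * left; auto.
    + right. eapply incl_trans; eauto.
  - destruct (classic (exists G, C G /\ incl (f m) G)) as [[G [CG HG]] | Hno].
    + right. intros a b Hab. right. exists G. split; auto.
    + left. intros a b [H0 | [G [CG HG]]].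
      * apply (tower_G0 G0 f Hinf m Tm); auto.
      * destruct (IH G CG) as [H1 | H1]; auto. exfalso; apply Hno; eauto.
Qed.

Lemma tw_lemma2 {A B : Type} G0 f (Hinf : forall G, @incl A B G (f G)) m :
  tower G0 f m -> forall n, tower G0 f n -> incl n m -> incl m n \/ incl (f n) m.
Proof.
  induction 1 as [x Tx IH | C HC IH]; intros n Tn Hn.
  - destruct (tw_lemma1 G0 f Hinf x Tx IH n Tn) as [Hnx | Hfx].
    + destruct (IH n Tn Hnx) as [Hxn | Hfn].
      * right. rewrite (incl_antisym x n Hxn Hnx). intros a b; auto.
      * right. eapply incl_trans; eauto.
    + left; auto.
  - destruct (classic (exists G, C G /\ incl n G)) as [[G [CG HG]] | Hno].
    + destruct (IH G CG n Tn HG) as [HGn | HfG].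
      * rewrite <- (incl_antisym G n HGn HG) in *.
        assert (HnG : forall G', C G' -> incl G' G \/ incl (f G) G').
        { intros G' CG'. apply (tw_lemma1 G0 f Hinf G (HC G CG) (IH G CG) G' (HC G' CG')). }
        destruct (classic (exists G', C G' /\ incl (f G) G')) as [[G' [CG' HG']] | Hno'].
        -- right. intros a b Hab. right. exists G'. auto.
        -- left. intros a b [H0 | [G' [CG' HG']]].
           ++ apply (tower_G0 G0 f Hinf G (HC G CG)); auto.
           ++ destruct (HnG G' CG') as [H1 | H1]; auto. exfalso; apply Hno'; eauto.
      * right. intros a b Hab. right. exists G. auto.
    + left. intros a b [H0 | [G [CG HG]]].
      * apply (tower_G0 G0 f Hinf n Tn); auto.
      * destruct (tw_lemma1 G0 f Hinf G (HC G CG) (IH G CG) n Tn) as [H1 | H1].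
        -- exfalso; apply Hno; eauto.
        -- apply H1, Hinf; auto.
Qed.

Lemma tw_linear {A B : Type} G0 f (Hinf : forall G, @incl A B G (f G)) m n :
  tower G0 f m -> tower G0 f n -> incl n m \/ incl m n.
Proof.
  intros Tm Tn. destruct (tw_lemma1 G0 f Hinf m Tm (tw_lemma2 G0 f Hinf m Tm) n Tn) as [H|H]; auto.
  right. eapply incl_trans; [apply Hinf | exact H].
Qed.

Lemma tw_max {A B : Type} G0 f (Hinf : forall G, @incl A B G (f G)) :
  let M := Un G0 (tower G0 f) in tower G0 f M /\ incl (f M) M.
Proof.
  intro M. assert (TM : tower G0 f M) by (apply tw_U; auto).
  split; auto. intros a b Hab. right. exists (f M). split; auto. apply tw_f; auto.
Qed.

Definition sublin (E : RVS) (p : E -> R) : Prop :=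
  (forall a b, p (ad a b) <= p a + p b) /\ (forall t y, 0 < t -> p (sc t y) <= t * p y).

Definition valid (E : RVS) (p : E -> R) (G : E -> R -> Prop) : Prop :=
  (forall a x y, G a x -> G a y -> x = y) /\ G z0 0 /\
  (forall a b x y, G a x -> G b y -> G (ad a b) (x + y)) /\
  (forall t a x, G a x -> G (sc t a) (t * x)) /\
  (forall a x, G a x -> x <= p a).

Lemma phom_ge (E : RVS) p (Hp : sublin E p) t y : 0 < t -> t * p y <= p (sc t y).
Proof.
  intro Ht. destruct Hp as [_ H]. pose proof (H (/t) (sc t y) (Rinv_0_lt_compat _ Ht)) as H1.
  rewrite sc_sc, Rinv_l, sc_1 in H1 by lra.
  apply Rmult_le_compat_l with (r := t) in H1; [|lra].
  rewrite <- Rmult_assoc, Rinv_r, Rmult_1_l in H1 by lra. exact H1.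
Qed.

Definition ext (E : RVS) (G : E -> R -> Prop) (z : E) (c : R) : E -> R -> Prop :=
  fun a' b => exists a x t, G a x /\ a' = ad a (sc t z) /\ b = x + t * c.

Lemma ext_valid (E : RVS) p (Hp : sublin E p) G z c :
  valid E p G -> (forall y, ~ G z y) ->
  (forall a x, G a x -> x - p (ad a (sc (-1) z)) <= c) ->
  (forall b y, G b y -> c <= p (ad b z) - y) ->
  valid E p (ext E G z c).
Proof.
  intros [Vf [V0 [Va [Vs Vd]]]] Hz Hl Hu. unfold ext. split; [|split; [|split; [|split]]].
  - intros a' u w (a & x & t & Ga & -> & ->) (b & y & s & Gb & E1 & ->).
    destruct (Req_dec t s) as [<- | Hts].
    + assert (a = b).
      { apply (ad_cancel E (sc t z)). rewrite (ad_comm _ _ a), (ad_comm _ _ b). exact E1. }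
      subst b. rewrite (Vf _ _ _ Ga Gb). auto.
    + exfalso. apply lin_solve in E1. apply (Hz (/ (t - s) * (y + -1 * x))).
      assert (Hz' : z = sc (/ (t - s)) (ad b (sc (-1) a))).
      { rewrite <- E1, sc_sc, Rinv_l, sc_1 by lra. auto. }
      rewrite Hz'. apply Vs. apply Va; auto.
  - exists z0, 0, 0. repeat split; auto. rewrite sc_0, ad_z0; auto. ring.
  - intros a' b' u w (a & x & t & Ga & -> & ->) (b & y & s & Gb & -> & ->).
    exists (ad a b), (x + y), (t + s). repeat split; auto.
    rewrite ad_swap, sc_adl. auto. ring.
  - intros r a' u (a & x & t & Ga & -> & ->). exists (sc r a), (r * x), (r * t).
    repeat split; auto. rewrite sc_adr, sc_sc; auto. ring.
  - intros a' u (a & x & t & Ga & -> & ->).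
    destruct (Rtotal_order t 0) as [Hn | [-> | Hpos]].
    + set (s := - t). assert (Hs : 0 < s) by (unfold s; lra).
      pose proof (Hl _ _ (Vs (/ s) _ _ Ga)) as H1.
      pose proof (phom_ge E p Hp s (ad (sc (/ s) a) (sc (-1) z)) Hs) as H2.
      rewrite sc_adr, sc_sc, sc_sc, Rinv_r, sc_1 in H2 by lra.
      replace (s * -1) with t in H2 by (unfold s; ring).
      apply Rmult_le_compat_l with (r := s) in H1; [|lra].
      replace (s * (/ s * x - p (ad (sc (/ s) a) (sc (-1) z)))) with
        (x - s * p (ad (sc (/ s) a) (sc (-1) z))) in H1 by (field; lra).
      replace (t * c) with (- (s * c)) by (unfold s; ring). lra.
    + rewrite sc_0, ad_z0. replace (x + 0 * c) with x by ring. auto.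
    + pose proof (Hu _ _ (Vs (/ t) _ _ Ga)) as H1.
      pose proof (phom_ge E p Hp t (ad (sc (/ t) a) z) Hpos) as H2.
      rewrite sc_adr, sc_sc, Rinv_r, sc_1 in H2 by lra.
      apply Rmult_le_compat_l with (r := t) in H1; [|lra].
      replace (t * (p (ad (sc (/ t) a) z) - / t * x)) with
        (t * p (ad (sc (/ t) a) z) - x) in H1 by (field; lra).
      lra.
Qed.

Lemma ext_incl (E : RVS) G z c : forall a x, G a x -> ext E G z c a x.
Proof.
  intros a x Ga. exists a, x, 0. repeat split; auto. rewrite sc_0, ad_z0; auto. ring.
Qed.

Lemma ext_dom (E : RVS) p G z c : valid E p G -> ext E G z c z c.
Proof.
  intros [_ [V0 _]]. exists z0, 0, 1. repeat split; auto. rewrite sc_1, z0_ad; auto. ring.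
Qed.

Lemma ext_exists (E : RVS) p (Hp : sublin E p) G z :
  valid E p G -> (forall y, ~ G z y) ->
  exists H, valid E p H /\ (forall a x, G a x -> H a x) /\ exists y, H z y.
Proof.
  intros HV Hz. pose proof HV as [Vf [V0 [Va [Vs Vd]]]].
  set (S := fun r => exists a x, G a x /\ r = x - p (ad a (sc (-1) z))).
  assert (Hub : forall r b y, S r -> G b y -> r <= p (ad b z) - y).
  { intros r b y (a & x & Ga & ->) Gb.
    pose proof (Vd _ _ (Va _ _ _ _ Ga Gb)) as H1.
    destruct Hp as [Hs _]. pose proof (Hs (ad a (sc (-1) z)) (ad b z)) as H2.
    replace (ad (ad a (sc (-1) z)) (ad b z)) with (ad a b) in H2.
    - lra.
    - rewrite ad_swap, (ad_comm _ (sc (-1) z) z), ad_opp, ad_z0. auto. }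
  destruct (completeness S) as [c [Hc1 Hc2]].
  - exists (p (ad z0 z) - 0). intros r Hr. apply (Hub r z0 0 Hr V0).
  - exists (0 - p (ad z0 (sc (-1) z))). exists z0, 0. auto.
  - exists (ext E G z c). split; [|split].
    + apply ext_valid; auto.
      * intros a x Ga. apply Hc1. exists a, x. auto.
      * intros b y Gb. apply Hc2. intros r Hr. apply (Hub r b y Hr Gb).
    + apply ext_incl.
    + exists c. apply (ext_dom E p). auto.
Qed.

Lemma valid_Un (E : RVS) p G0 f (Hinf : forall G, @incl E R G (f G)) C :
  valid E p G0 -> (forall G, C G -> tower G0 f G) -> (forall G, C G -> valid E p G) ->
  valid E p (Un G0 C).
Proof.
  intros V0 TC VC.
  set (mem := fun K => K = G0 \/ C K).
  assert (Mv : forall K, mem K -> valid E p K) by (intros K [->|HK]; auto).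
  assert (Mi : forall K, mem K -> incl K (Un G0 C)).
  { intros K [->|HK] a x H; [left; auto | right; eauto]. }
  assert (Mc : forall K K', mem K -> mem K' -> incl K K' \/ incl K' K).
  { intros K K' [->|HK] [->|HK'].
    - left; intros a b; auto.
    - left. apply (tower_G0 G0 f Hinf); auto.
    - right. apply (tower_G0 G0 f Hinf); auto.
    - apply (tw_linear G0 f Hinf); auto. }
  assert (Mpt : forall a x, Un G0 C a x -> exists K, mem K /\ K a x).
  { intros a x [H|[G [CG HG]]]; [exists G0; split; [left|]; auto | exists G; split; [right|]; auto]. }
  assert (Two : forall a x b y, Un G0 C a x -> Un G0 C b y ->
     exists K, mem K /\ K a x /\ K b y).
  { intros a x b y H1 H2. destruct (Mpt _ _ H1) as [K [MK HK]]. destruct (Mpt _ _ H2) as [K' [MK' HK']].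
    destruct (Mc K K' MK MK') as [I|I]; [exists K'|exists K]; auto. }
  pose proof V0 as [_ [V00 _]].
  split; [|split; [|split; [|split]]].
  - intros a x y H1 H2. destruct (Two _ _ _ _ H1 H2) as [K [MK [A1 A2]]].
    destruct (Mv K MK) as [Vf _]. eauto.
  - left; auto.
  - intros a b x y H1 H2. destruct (Two _ _ _ _ H1 H2) as [K [MK [A1 A2]]].
    apply (Mi K MK). destruct (Mv K MK) as [_ [_ [Va _]]]. auto.
  - intros t a x H1. destruct (Mpt _ _ H1) as [K [MK A1]].
    apply (Mi K MK). destruct (Mv K MK) as [_ [_ [_ [Vs _]]]]. auto.
  - intros a x H1. destruct (Mpt _ _ H1) as [K [MK A1]].
    destruct (Mv K MK) as [_ [_ [_ [_ Vd]]]]. auto.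
Qed.

Definition fspec (E : RVS) p (G H : E -> R -> Prop) : Prop :=
  incl G H /\ (valid E p G -> valid E p H) /\
  (valid E p G -> (exists z, forall y, ~ G z y) -> exists z, (exists y, H z y) /\ forall y, ~ G z y).

Lemma fspec_ex (E : RVS) p (Hp : sublin E p) G : exists H, fspec E p G H.
Proof.
  destruct (classic (valid E p G /\ exists z, forall y, ~ G z y)) as [[HV [z Hz]] | Hn].
  - destruct (ext_exists E p Hp G z HV Hz) as [H [VH [IH DH]]].
    exists H. split; [|split]; auto. intros _ _. exists z. auto.
  - exists G. split; [intros a b; auto | split]; auto. intros HV HZ. exfalso; auto.
Qed.

Theorem HB (E : RVS) p (Hp : sublin E p) x0 al :
  x0 <> z0 -> al <= p x0 -> - p (sc (-1) x0) <= al ->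
  exists phi : E -> R, (forall a b, phi (ad a b) = phi a + phi b) /\
    (forall t a, phi (sc t a) = t * phi a) /\ (forall a, phi a <= p a) /\ phi x0 = al.
Proof.
  intros Hx0 Hal1 Hal2.
  assert (Hpz : 0 <= p z0).
  { destruct Hp as [_ Hh]. pose proof (Hh 2 z0 ltac:(lra)) as H. rewrite sc_z0 in H. lra. }
  set (G00 := fun (a : E) (x : R) => a = z0 /\ x = 0).
  assert (V00 : valid E p G00).
  { unfold G00. split; [|split; [|split; [|split]]].
    - intros a x y [_ ->] [_ ->]; auto.
    - auto.
    - intros a b x y [-> ->] [-> ->]. split; [apply ad_z0 | ring].
    - intros t a x [-> ->]. split; [apply sc_z0 | ring].
    - intros a x [-> ->]. auto. }
  set (G0 := ext E G00 x0 al).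
  assert (VG0 : valid E p G0).
  { apply ext_valid; auto.
    - intros y [H _]. auto.
    - intros a x [-> ->]. rewrite z0_ad. lra.
    - intros b y [-> ->]. rewrite z0_ad. lra. }
  set (f := fun G => proj1_sig (constructive_indefinite_description _ (fspec_ex E p Hp G))).
  assert (Hf : forall G, fspec E p G (f G)).
  { intro G. unfold f. destruct (constructive_indefinite_description _ _). auto. }
  assert (Hinf : forall G, incl G (f G)) by (intro G; apply Hf).
  assert (TV : forall G, tower G0 f G -> valid E p G).
  { induction 1 as [G TG IH | C HC IH].
    - apply (Hf G); auto.
    - apply (valid_Un E p G0 f Hinf); auto. }
  destruct (tw_max G0 f Hinf) as [TM IM].
  set (M := Un G0 (tower G0 f)) in *.
  assert (VM : valid E p M) by auto.
  assert (Tot : forall a, exists y, M a y).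
  { apply NNPP. intro Hn. apply not_all_ex_not in Hn. destruct Hn as [z Hz].
    destruct (proj2 (proj2 (Hf M)) VM) as [z' [[y Hy] Hz']].
    - exists z. intros y Hy. apply Hz. eauto.
    - apply (Hz' y). apply IM; auto. }
  set (phi := fun a => proj1_sig (constructive_indefinite_description _ (Tot a))).
  assert (Hphi : forall a, M a (phi a)).
  { intro a. unfold phi. destruct (constructive_indefinite_description _ _). auto. }
  destruct VM as [Vf [V0 [Va [Vs Vd]]]].
  exists phi. split; [|split; [|split]].
  - intros a b. apply (Vf (ad a b)); auto.
  - intros t a. apply (Vf (sc t a)); auto.
  - intro a. apply Vd; auto.
  - apply (Vf x0); auto. left. apply ext_dom with (p := p); auto.
Qed.

Definition ubd (g : nat -> R) := exists K, forall n, g n <= K.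

Definition supS (g : nat -> R) : R :=
  match excluded_middle_informative (ubd g) with
  | left H => proj1_sig (completeness (fun r => exists n, r = g n)
        (match H with ex_intro _ K HK => ex_intro _ K (fun r Hr => match Hr with ex_intro _ n e => eq_ind_r (fun r => r <= K) (HK n) e end) end)
        (ex_intro _ (g 0%nat) (ex_intro _ 0%nat eq_refl)))
  | right _ => 0
  end.

Lemma sup_ge g n : ubd g -> g n <= supS g.
Proof.
  intro H. unfold supS. destruct (excluded_middle_informative (ubd g)) as [H'|H']; [|contradiction].
  destruct (completeness _ _ _) as [s [Hs1 Hs2]]. simpl. apply Hs1. eauto.
Qed.

Lemma sup_le g b : (forall n, g n <= b) -> supS g <= b.
Proof.
  intro H. assert (Hu : ubd g) by (exists b; auto). unfold supS.
  destruct (excluded_middle_informative (ubd g)) as [H'|H']; [|contradiction].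
  destruct (completeness _ _ _) as [s [Hs1 Hs2]]. simpl. apply Hs2. intros r [n ->]. auto.
Qed.

Definition bnd (f : nat -> R) := exists K, forall n, 0 <= f n <= K.
Definition SN (f : nat -> R) (N : nat) := supS (fun n => f (n + N)%nat).
Definition lims (f : nat -> R) : R := - supS (fun N => - SN f N).

Lemma SN_ge f N n : bnd f -> f (n + N)%nat <= SN f N.
Proof. intros [K HK]. unfold SN. apply (sup_ge (fun n => f (n + N)%nat)). exists K; intro; apply HK. Qed.

Lemma SN_le f N b : (forall n, f (n + N)%nat <= b) -> SN f N <= b.
Proof. intro H. unfold SN. apply sup_le. auto. Qed.

Lemma SN_nonneg f N : bnd f -> 0 <= SN f N.
Proof. intro H. pose proof (SN_ge f N 0 H). destruct H as [K HK]. specialize (HK (0 + N)%nat). lra. Qed.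

Lemma lims_le f N : bnd f -> lims f <= SN f N.
Proof.
  intro H. unfold lims. assert (ubd (fun N => - SN f N)).
  { exists 0. intro n. pose proof (SN_nonneg f n H). lra. }
  pose proof (sup_ge _ N H0). simpl in H1. lra.
Qed.

Lemma lims_ge f b : (forall N, b <= SN f N) -> b <= lims f.
Proof.
  intro H. unfold lims. assert (supS (fun N => - SN f N) <= - b).
  { apply sup_le. intro n. specialize (H n). lra. }
  lra.
Qed.

Lemma SN_mono f N N' : bnd f -> (N <= N')%nat -> SN f N' <= SN f N.
Proof.
  intros H HN. apply SN_le. intro n. replace (n + N')%nat with ((n + (N' - N)) + N)%nat by lia.
  apply SN_ge; auto.
Qed.

Lemma lims_sub f g1 g2 : bnd f -> bnd g1 -> bnd g2 -> (forall n, f n <= g1 n + g2 n) ->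
  lims f <= lims g1 + lims g2.
Proof.
  intros Bf B1 B2 H.
  assert (A : forall N1 N2, lims f <= SN g1 N1 + SN g2 N2).
  { intros N1 N2. set (N := Nat.max N1 N2).
    assert (lims f <= SN f N) by (apply lims_le; auto).
    assert (SN f N <= SN g1 N + SN g2 N).
    { apply SN_le. intro n. specialize (H (n + N)%nat).
      pose proof (SN_ge g1 N n B1). pose proof (SN_ge g2 N n B2). lra. }
    pose proof (SN_mono g1 N1 N B1 ltac:(lia)). pose proof (SN_mono g2 N2 N B2 ltac:(lia)). lra. }
  assert (A2 : forall N2, lims f - SN g2 N2 <= lims g1).
  { intro N2. apply lims_ge. intro N1. specialize (A N1 N2). lra. }
  assert (lims f - lims g1 <= lims g2).
  { apply lims_ge. intro N2. specialize (A2 N2). lra. }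
  lra.
Qed.

Lemma lims_hom f g t : bnd f -> bnd g -> 0 < t -> (forall n, f n <= t * g n) -> lims f <= t * lims g.
Proof.
  intros Bf Bg Ht H.
  assert (lims f / t <= lims g).
  { apply lims_ge. intro N. assert (lims f <= SN f N) by (apply lims_le; auto).
    assert (SN f N <= t * SN g N).
    { apply SN_le. intro n. specialize (H (n + N)%nat). pose proof (SN_ge g N n Bg).
      apply Rmult_le_compat_l with (r := t) in H1; lra. }
    apply Rmult_le_reg_l with t; auto. field_simplify; lra. }
  apply Rmult_le_compat_l with (r := t) in H0; [|lra].
  replace (t * (lims f / t)) with (lims f) in H0 by (field; lra). lra.
Qed.

Lemma lims_bound f K : bnd f -> (forall n, f n <= K) -> lims f <= K.
Proof.
  intros B H. pose proof (lims_le f 0 B). assert (SN f 0 <= K) by (apply SN_le; auto). lra.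
Qed.

Lemma lims_zero f C : bnd f -> (forall n, f n <= C / INR (S n)) -> lims f <= 0.
Proof.
  intros B H. apply Rnot_lt_le. intro Hl.
  destruct (INR_archimed (lims f) C Hl) as [N HN].
  pose proof (lims_le f N B).
  assert (SN f N <= C / INR (S N)).
  { apply SN_le. intro n. eapply Rle_trans; [apply H|].
    assert (0 <= C).
    { pose proof (H 0%nat). destruct B as [K HK]. specialize (HK 0%nat).
      assert (0 <= C / INR 1) by lra. simpl in H2. lra. }
    unfold Rdiv. apply Rmult_le_compat_l; auto. apply Rinv_le_contravar.
    - apply lt_0_INR; lia.
    - apply le_INR; lia. }
  assert (lims f * INR (S N) <= C).
  { assert (0 < INR (S N)) by (apply lt_0_INR; lia).
    assert (lims f <= C / INR (S N)) by lra.
    apply Rmult_le_compat_r with (r := INR (S N)) in H3; [|lra].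
    replace (C / INR (S N) * INR (S N)) with C in H3 by (field; lra). lra. }
  rewrite S_INR in H2. lra.
Qed.

Lemma lims_lower f e : bnd f -> (forall n, e <= f n) -> e <= lims f.
Proof.
  intros B H. apply lims_ge. intro N. pose proof (SN_ge f N 0 B). specialize (H (0 + N)%nat). lra.
Qed.

Lemma RtoC_plus r s : Cplus (RtoC r) (RtoC s) = RtoC (r + s).
Proof. unfold Cplus, RtoC; simpl. f_equal; ring. Qed.
Lemma RtoC_mult r s : Cmult (RtoC r) (RtoC s) = RtoC (r * s).
Proof. unfold Cmult, RtoC; simpl. f_equal; ring. Qed.
Lemma Cmod_RtoC r : Cmod (RtoC r) = Rabs r.
Proof. unfold Cmod, RtoC; simpl. replace (r * r + 0 * 0) with (Rsqr r) by (unfold Rsqr; ring). apply sqrt_Rsqr_abs. Qed.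
Lemma C1_RtoC : C1 = RtoC 1.
Proof. reflexivity. Qed.
Lemma Cmod_nonneg a : 0 <= Cmod a.
Proof. apply sqrt_pos. Qed.

Lemma vadd_cancel (V : CNormedSpace) (a b c : V) : vadd a b = vadd a c -> b = c.
Proof.
  intro H. assert (H2 : vadd (vopp a) (vadd a b) = vadd (vopp a) (vadd a c)) by (rewrite H; auto).
  rewrite !vadd_assoc, (vadd_comm _ (vopp a) a), vadd_opp in H2.
  rewrite (vadd_comm _ vzero b), (vadd_comm _ vzero c), !vadd_zero in H2. exact H2.
Qed.

Lemma vscal_0 (V : CNormedSpace) (x : V) : vscal (RtoC 0) x = vzero.
Proof.
  apply (vadd_cancel V (vscal (RtoC 0) x)). rewrite vadd_zero, <- vscal_distr_c, RtoC_plus.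
  f_equal. f_equal. ring.
Qed.



Lemma vscal_zero (V : CNormedSpace) (a : CC) : vscal a (@vzero V) = vzero.
Proof.
  apply (vadd_cancel V (vscal a vzero)). rewrite vadd_zero, <- vscal_distr_v, vadd_zero. auto.
Qed.

Lemma vopp_scal (V : CNormedSpace) (x : V) : vopp x = vscal (RtoC (-1)) x.
Proof.
  apply (vadd_cancel V x). rewrite vadd_opp. rewrite <- (vscal_one V x) at 1.
  rewrite C1_RtoC, <- vscal_distr_c, RtoC_plus. replace (1 + -1) with 0 by ring. rewrite vscal_0. auto.
Qed.

Lemma vnorm_opp (V : CNormedSpace) (x : V) : vnorm (vscal (RtoC (-1)) x) = vnorm x.
Proof. rewrite vnorm_scal, Cmod_RtoC, Rabs_left by lra. ring. Qed.

Lemma bounded_add (V : CNormedSpace) (x y : nat -> V) : bounded_seq x -> bounded_seq y -> bounded_seq (seq_add x y).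
Proof.
  intros [M1 H1] [M2 H2]. exists (M1 + M2). intro n. unfold seq_add.
  pose proof (vnorm_triangle V (x n) (y n)). specialize (H1 n). specialize (H2 n). lra.
Qed.
Lemma bounded_scal (V : CNormedSpace) a (x : nat -> V) : bounded_seq x -> bounded_seq (seq_scal a x).
Proof.
  intros [M H]. exists (Cmod a * M). intro n. unfold seq_scal. rewrite vnorm_scal.
  apply Rmult_le_compat_l; auto. apply Cmod_nonneg.
Qed.
Lemma bounded_const (V : CNormedSpace) (v : V) : bounded_seq (const_seq v).
Proof. exists (vnorm v). intro n. unfold const_seq. lra. Qed.
Lemma bounded_shift (V : CNormedSpace) (x : nat -> V) : bounded_seq x -> bounded_seq (shift x).
Proof. intros [M H]. exists M. intro n. apply H. Qed.

Definition BS (V : CNormedSpace) := {x : nat -> V | bounded_seq x}.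

Lemma BS_eq (V : CNormedSpace) (a b : BS V) : proj1_sig a = proj1_sig b -> a = b.
Proof. destruct a as [a Ha], b as [b Hb]; simpl. intros ->. f_equal. apply proof_irrelevance. Qed.

Definition BSadd (V : CNormedSpace) (a b : BS V) : BS V :=
  exist _ (seq_add (proj1_sig a) (proj1_sig b)) (bounded_add V _ _ (proj2_sig a) (proj2_sig b)).
Definition BSscalC (V : CNormedSpace) (c : CC) (a : BS V) : BS V :=
  exist _ (seq_scal c (proj1_sig a)) (bounded_scal V c _ (proj2_sig a)).
Definition BSscal (V : CNormedSpace) (r : R) (a : BS V) : BS V := BSscalC V (RtoC r) a.
Definition BSzero (V : CNormedSpace) : BS V := exist _ (const_seq vzero) (bounded_const V vzero).

Ltac bs_ext := apply BS_eq; simpl; extensionality n; unfold seq_add, seq_scal, const_seq.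

Definition BSR (V : CNormedSpace) : RVS.
Proof.
  refine (Build_RVS (BS V) (BSzero V) (BSadd V) (BSscal V) _ _ _ _ _ _ _ _).
  - intros. bs_ext. apply vadd_assoc.
  - intros. bs_ext. apply vadd_comm.
  - intros. bs_ext. apply vadd_zero.
  - intros. bs_ext. rewrite <- vopp_scal. apply vadd_opp.
  - intros. bs_ext. apply vscal_distr_v.
  - intros. bs_ext. rewrite <- RtoC_plus. apply vscal_distr_c.
  - intros. bs_ext. rewrite vscal_assoc, RtoC_mult. auto.
  - intros. bs_ext. rewrite <- C1_RtoC. apply vscal_one.
Defined.

Lemma vadd_swap (V : CNormedSpace) (a b c d : V) : vadd (vadd a b) (vadd c d) = vadd (vadd a c) (vadd b d).
Proof. rewrite <- !vadd_assoc. f_equal. rewrite !vadd_assoc. f_equal. apply vadd_comm. Qed.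

Lemma vsum_add (V : CNormedSpace) (a b : nat -> V) m : vsum (seq_add a b) m = vadd (vsum a m) (vsum b m).
Proof.
  induction m; simpl. - rewrite vadd_zero; auto. - rewrite IHm. unfold seq_add. apply vadd_swap.
Qed.

Lemma vsum_scal (V : CNormedSpace) c (a : nat -> V) m : vsum (seq_scal c a) m = vscal c (vsum a m).
Proof.
  induction m; simpl. - rewrite vscal_zero; auto. - rewrite IHm, vscal_distr_v. auto.
Qed.

Lemma vsum_norm (V : CNormedSpace) (a : nat -> V) M m : (forall k, vnorm (a k) <= M) -> vnorm (vsum a m) <= INR m * M.
Proof.
  intro H. induction m; cbn [vsum].
  - rewrite vnorm_zero. simpl. lra.
  - pose proof (vnorm_triangle V (vsum a m) (a m)). specialize (H m). rewrite S_INR. lra.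
Qed.

Definition avg (V : CNormedSpace) (n : nat) (y : nat -> V) : V := vscal (RtoC (/ INR (S n))) (vsum y (S n)).
Definition gseq (V : CNormedSpace) (y : nat -> V) : nat -> R := fun n => vnorm (avg V n y).
Definition pS (V : CNormedSpace) (y : nat -> V) : R := lims (gseq V y).

Lemma Cmult_comm a b : Cmult a b = Cmult b a.
Proof. unfold Cmult. f_equal; ring. Qed.

Lemma avg_add (V : CNormedSpace) n (a b : nat -> V) : avg V n (seq_add a b) = vadd (avg V n a) (avg V n b).
Proof. unfold avg. rewrite vsum_add, vscal_distr_v. auto. Qed.

Lemma avg_scal (V : CNormedSpace) n c (a : nat -> V) : avg V n (seq_scal c a) = vscal c (avg V n a).
Proof. unfold avg. rewrite vsum_scal, !vscal_assoc, Cmult_comm. auto. Qed.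

Lemma INRS_pos n : 0 < INR (S n).
Proof. apply lt_0_INR; lia. Qed.

Lemma avg_bound (V : CNormedSpace) n (a : nat -> V) M : (forall k, vnorm (a k) <= M) -> vnorm (avg V n a) <= M.
Proof.
  intro H. unfold avg. rewrite vnorm_scal, Cmod_RtoC. pose proof (INRS_pos n).
  rewrite Rabs_right by (left; apply Rinv_0_lt_compat; lra).
  pose proof (vsum_norm V a M (S n) H).
  apply Rmult_le_compat_l with (r := / INR (S n)) in H1; [|left; apply Rinv_0_lt_compat; lra].
  replace (/ INR (S n) * (INR (S n) * M)) with M in H1 by (field; lra). exact H1.
Qed.

Lemma gseq_bnd (V : CNormedSpace) (y : nat -> V) : bounded_seq y -> bnd (gseq V y).
Proof.
  intros [M H]. exists M. intro n. split. apply vnorm_nonneg. apply avg_bound; auto.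
Qed.

Definition pB (V : CNormedSpace) (y : BSR V) : R := pS V (proj1_sig y).

Lemma pB_sublin (V : CNormedSpace) : sublin (BSR V) (pB V).
Proof.
  split.
  - intros [a Ha] [b Hb]. unfold pB. simpl. apply lims_sub; try apply gseq_bnd; auto.
    + apply bounded_add; auto.
    + intro n. unfold gseq. rewrite avg_add. apply vnorm_triangle.
  - intros t [y Hy] Ht. unfold pB. simpl. apply lims_hom; try apply gseq_bnd; auto.
    + apply bounded_scal; auto.
    + intro n. unfold gseq. rewrite avg_scal, vnorm_scal, Cmod_RtoC, Rabs_right by lra. lra.
Qed.

Lemma pS_bound (V : CNormedSpace) (y : nat -> V) K : bounded_seq y -> (forall n, vnorm (y n) <= K) -> pS V y <= K.
Proof.
  intros B H. apply lims_bound. apply gseq_bnd; auto. intro n. apply avg_bound; auto.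
Qed.

Lemma pS_opp (V : CNormedSpace) (y : nat -> V) : pS V (seq_scal (RtoC (-1)) y) = pS V y.
Proof.
  unfold pS. f_equal. extensionality n. unfold gseq. rewrite avg_scal. apply vnorm_opp.
Qed.

Lemma telescope (V : CNormedSpace) (w : nat -> V) m :
  vsum (seq_add w (seq_scal (RtoC (-1)) (shift w))) m = vadd (w 0%nat) (vscal (RtoC (-1)) (w m)).
Proof.
  induction m; simpl.
  - rewrite <- vopp_scal, vadd_opp. auto.
  - rewrite IHm. unfold seq_add, seq_scal, shift. rewrite <- !vadd_assoc. f_equal.
    rewrite vadd_assoc, (vadd_comm _ (vscal _ (w m)) (w m)), <- vopp_scal, vadd_opp.
    rewrite vadd_comm, vadd_zero. auto.
Qed.

Lemma pS_shift (V : CNormedSpace) (w : nat -> V) : bounded_seq w ->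
  pS V (seq_add w (seq_scal (RtoC (-1)) (shift w))) <= 0.
Proof.
  intros B. pose proof B as [M HM].
  apply (lims_zero _ (2 * M)).
  - apply gseq_bnd. apply bounded_add; auto. apply bounded_scal, bounded_shift; auto.
  - intro n. unfold gseq, avg. rewrite telescope, vnorm_scal, Cmod_RtoC.
    pose proof (INRS_pos n).
    rewrite Rabs_right by (left; apply Rinv_0_lt_compat; lra).
    pose proof (vnorm_triangle V (w 0%nat) (vscal (RtoC (-1)) (w (S n)))).
    rewrite vnorm_opp in H0. pose proof (HM 0%nat). pose proof (HM (S n)).
    unfold Rdiv. rewrite (Rmult_comm (2 * M)). apply Rmult_le_compat_l; [left; apply Rinv_0_lt_compat; lra|]. lra.
Qed.

Definition iC : CC := mkCC 0 1.

Definition Lof (V : CNormedSpace) (phi : BSR V -> R) (z : nat -> V) : CC :=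
  match excluded_middle_informative (bounded_seq z) with
  | left H => mkCC (phi (exist _ z H)) (- phi (BSscalC V iC (exist _ z H)))
  | right _ => C0
  end.

Lemma Lval (V : CNormedSpace) phi z (H : bounded_seq z) :
  Lof V phi z = mkCC (phi (exist _ z H)) (- phi (BSscalC V iC (exist _ z H))).
Proof.
  unfold Lof. destruct (excluded_middle_informative (bounded_seq z)) as [H'|H']; [|contradiction].
  replace H' with H by apply proof_irrelevance. auto.
Qed.

Lemma scalC_decomp (V : CNormedSpace) a (Z : BSR V) :
  BSscalC V a Z = @ad (BSR V) (@sc (BSR V) (Cre a) Z) (@sc (BSR V) (Cim a) (BSscalC V iC Z)).
Proof.
  apply BS_eq. simpl. extensionality n. unfold seq_add, seq_scal.
  rewrite vscal_assoc, <- vscal_distr_c. f_equal. destruct a. unfold Cplus, Cmult, RtoC, iC; simpl. f_equal; ring.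
Qed.

Lemma scalC_scalC (V : CNormedSpace) c d (Z : BSR V) : BSscalC V c (BSscalC V d Z) = BSscalC V (Cmult c d) Z.
Proof. apply BS_eq. simpl. extensionality n. unfold seq_scal. apply vscal_assoc. Qed.

Definition BSshift (V : CNormedSpace) (Z : BS V) : BS V :=
  exist _ (shift (proj1_sig Z)) (bounded_shift V _ (proj2_sig Z)).

Lemma BL_of_phi (V : CNormedSpace) (phi : BSR V -> R) :
  (forall a b, phi (ad a b) = phi a + phi b) -> (forall t a, phi (sc t a) = t * phi a) ->
  (forall a, phi a <= pB V a) -> BanachLimit (Lof V phi).
Proof.
  intros Ha Hs Hd.
  assert (HC : forall a Z, phi (BSscalC V a Z) = Cre a * phi Z + Cim a * phi (BSscalC V iC Z)).
  { intros a Z. rewrite scalC_decomp, Ha, !Hs. auto. }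
  assert (Hsh : forall Z : BSR V, phi (BSshift V Z) = phi Z).
  { intro Z. set (D := @ad (BSR V) Z (@sc (BSR V) (-1) (BSshift V Z))).
    assert (E1 : phi D = phi Z - phi (BSshift V Z)) by (unfold D; rewrite Ha, Hs; ring).
    assert (E2 : phi D <= 0).
    { eapply Rle_trans; [apply Hd|]. unfold pB, D. destruct Z as [z Hz]. simpl. apply pS_shift; auto. }
    assert (E3 : phi (@sc (BSR V) (-1) D) <= 0).
    { eapply Rle_trans; [apply Hd|]. unfold pB, D. destruct Z as [z Hz]. simpl.
      unfold BSscal, BSscalC. simpl. rewrite pS_opp. apply pS_shift; auto. }
    rewrite Hs in E3. lra. }
  split; [|split; [|split]].
  - intros x y Hx Hy. rewrite (Lval V phi _ (bounded_add V _ _ Hx Hy)), (Lval V phi _ Hx), (Lval V phi _ Hy).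
    replace (exist _ (seq_add x y) (bounded_add V x y Hx Hy)) with
      (@ad (BSR V) (exist _ x Hx) (exist _ y Hy)) by (apply BS_eq; auto).
    replace (BSscalC V iC (@ad (BSR V) (exist _ x Hx) (exist _ y Hy))) with
      (@ad (BSR V) (BSscalC V iC (exist _ x Hx)) (BSscalC V iC (exist _ y Hy))).
    2:{ apply BS_eq. simpl. extensionality n. unfold seq_add, seq_scal. rewrite vscal_distr_v. auto. }
    rewrite !Ha. unfold Cplus. simpl. f_equal. ring.
  - intros a x Hx. rewrite (Lval V phi _ (bounded_scal V a x Hx)), (Lval V phi _ Hx).
    replace (exist _ (seq_scal a x) (bounded_scal V a x Hx)) with (BSscalC V a (exist _ x Hx)) by (apply BS_eq; auto).
    rewrite scalC_scalC, (HC a), (HC (Cmult iC a)). destruct a as [ar ai]. unfold Cmult, iC. simpl. f_equal; ring.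
  - intros z M Hz HM. rewrite (Lval V phi _ Hz). set (Z := exist _ z Hz : BSR V).
    set (u := phi Z). set (w := - phi (BSscalC V iC Z)).
    assert (HM0 : 0 <= M) by (pose proof (vnorm_nonneg V (z 0%nat)); pose proof (HM 0%nat); lra).
    unfold Cmod. simpl. change (phi (exist _ z Hz)) with u. change (- phi (BSscalC V iC Z)) with w.
    set (r := sqrt (u * u + w * w)).
    assert (Hr2 : r * r = u * u + w * w) by (apply sqrt_sqrt; nra).
    destruct (Req_dec r 0) as [Hr0|Hr0]; [lra|].
    assert (Hrp : 0 < r) by (pose proof (sqrt_pos (u * u + w * w)); fold r in H; lra).
    set (a := mkCC (u / r) (- w / r)).
    assert (Ha1 : Cmod a = 1).
    { unfold Cmod, a. simpl. replace (u / r * (u / r) + - w / r * (- w / r)) with 1. apply sqrt_1.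
      replace (u / r * (u / r) + - w / r * (- w / r)) with ((u * u + w * w) / (r * r)) by (field; lra). rewrite <- Hr2. field. lra. }
    assert (E : phi (BSscalC V a Z) = r).
    { rewrite HC. unfold a. simpl. fold u. replace (phi (BSscalC V iC Z)) with (- w) by (unfold w; ring).
      replace (u / r * u + - w / r * - w) with ((u * u + w * w) / r) by (field; lra). rewrite <- Hr2. field. lra. }
    rewrite <- E. eapply Rle_trans; [apply Hd|]. unfold pB. simpl. apply pS_bound.
    + apply bounded_scal; auto.
    + intro n. unfold seq_scal. rewrite vnorm_scal, Ha1. specialize (HM n). lra.
  - intros x Hx. rewrite (Lval V phi _ (bounded_shift V x Hx)), (Lval V phi _ Hx).
    replace (exist _ (shift x) (bounded_shift V x Hx)) with (BSshift V (exist _ x Hx)) by (apply BS_eq; auto).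
    replace (BSscalC V iC (BSshift V (exist _ x Hx))) with (BSshift V (BSscalC V iC (exist _ x Hx))) by (apply BS_eq; auto).
    rewrite !Hsh. auto.
Qed.

Lemma rsum_const c m : rsum (fun _ => c) m = INR m * c.
Proof. induction m; cbn [rsum]. - simpl; ring. - rewrite IHm, S_INR. ring. Qed.

Lemma vsum_const (V : CNormedSpace) (v : V) m : vsum (const_seq v) m = vscal (RtoC (INR m)) v.
Proof.
  induction m; cbn [vsum].
  - simpl. rewrite vscal_0. auto.
  - rewrite IHm. unfold const_seq. rewrite <- (vscal_one V v) at 2. rewrite C1_RtoC, <- vscal_distr_c, RtoC_plus, S_INR. auto.
Qed.

Lemma avg_const (V : CNormedSpace) n (v : V) : avg V n (const_seq v) = v.
Proof.
  unfold avg. rewrite vsum_const, vscal_assoc, RtoC_mult, Rinv_l, <- C1_RtoC, vscal_one; auto.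
  pose proof (INRS_pos n). lra.
Qed.

Lemma pS_nonneg (V : CNormedSpace) (y : nat -> V) : bounded_seq y -> 0 <= pS V y.
Proof. intro B. apply lims_lower. apply gseq_bnd; auto. intro n. apply vnorm_nonneg. Qed.

Theorem mainTheorem15 (V : CNormedSpace) (x : nat -> V) (v : V) :
  bounded_seq x ->
  strongly_almost_convergent x v ->
  in_closure (in_convex_hull (range_of x)) v.
Proof.
  intros Hb SAC. apply NNPP. intro Hn. unfold in_closure in Hn.
  apply not_all_ex_not in Hn. destruct Hn as [eps Hn].
  apply imply_to_and in Hn. destruct Hn as [Heps Hn].
  assert (Far : forall y, in_convex_hull (range_of x) y -> eps <= vnorm (vsub v y)).
  { intros y Hy. apply Rnot_lt_le. intro Hl. apply Hn. eauto. }
  assert (Cv : forall n, in_convex_hull (range_of x) (avg V n x)).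
  { intro n. exists (S n), (fun _ => / INR (S n)), x. pose proof (INRS_pos n). split; [|split].
    - intros i _. split. left; apply Rinv_0_lt_compat; lra. exists i; auto.
    - rewrite rsum_const. field. lra.
    - unfold avg. rewrite <- vsum_scal. auto. }
  set (x0 := seq_add x (seq_scal (RtoC (-1)) (const_seq v))).
  assert (Bx0 : bounded_seq x0) by (apply bounded_add; auto; apply bounded_scal, bounded_const).
  assert (Px0 : eps <= pS V x0).
  { apply lims_lower. apply gseq_bnd; auto. intro n. unfold gseq, x0.
    rewrite avg_add, avg_scal, avg_const. pose proof (Far _ (Cv n)) as H.
    unfold vsub in H. rewrite vopp_scal in H. rewrite <- vnorm_opp, vscal_distr_v, vscal_assoc, RtoC_mult in H.
    replace (-1 * -1) with 1 in H by ring. rewrite <- C1_RtoC, vscal_one, vadd_comm in H. exact H. }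
  set (X0 := exist _ x0 Bx0 : BSR V).
  assert (NZ : X0 <> z0).
  { intro E. assert (pS V x0 <= 0).
    { replace x0 with (proj1_sig X0) by auto. rewrite E. simpl. apply pS_bound.
      apply bounded_const. intro n. unfold const_seq. rewrite vnorm_zero. lra. }
    lra. }
  destruct (HB (BSR V) (pB V) (pB_sublin V) X0 (pB V X0) NZ) as [phi [Ha [Hs [Hd H0]]]].
  - lra.
  - assert (0 <= pB V (sc (-1) X0)) by (apply pS_nonneg; apply (proj2_sig (sc (-1) X0))).
    assert (0 <= pB V X0) by (apply pS_nonneg; auto). lra.
  - pose proof (SAC (Lof V phi) (BL_of_phi V phi Ha Hs Hd)) as E.
    rewrite (Lval V phi _ Hb), (Lval V phi _ (bounded_const V v)) in E.
    injection E as E1 _.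
    assert (EX : X0 = @ad (BSR V) (exist _ x Hb) (@sc (BSR V) (-1) (exist _ (const_seq v) (bounded_const V v))))
      by (apply BS_eq; auto).
    assert (phi X0 = 0) by (rewrite EX, Ha, Hs, E1; ring).
    unfold pB in H0. simpl in H0. lra.
Qed.
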